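(* Let $N$ be a positive odd integer, $\alpha,\beta$ real with $((\alpha+1)/2)_k\neq0$ and $((\alpha+3)/2)_k\ne0$ for $k\le (N-1)/2$, and put $\eta=\tfrac{\alpha+\beta+2}{4}$. Let $P_n$ be the monic dual $-1$ Hahn polynomials defined in the context. Then, as polynomial identities in $x$, for $0\le n\le (N-1)/2$: $$P_{2n}(x-1)=16^n\left(\tfrac{1-N}{2}\right)_n\left(\tfrac{\alpha+1}{2}\right)_n\;{}_3F_2\!\left(\begin{matrix}-n,\ \eta+\tfrac x4,\ \eta-\tfrac x4\\ -\tfrac{N-1}{2},\ \tfrac{\alpha+1}{2}\end{matrix};1\right),$$ $$P_{2n+1}(x-1)=16^n\left(\tfrac{1-N}{2}\right)_n\left(\tfrac{\alpha+3}{2}\right)_n\,(x+\alpha-\beta)\;{}_3F_2\!\left(\begin{matrix}-n,\ \eta+\tfrac x4,\ \eta-\tfrac x4\\ -\tfrac{N-1}{2},\ \tfrac{\alpha+3}{2}\end{matrix};1\right).$$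
   Context: $(c)_k=c(c+1)\cdots(c+k-1)$, $(c)_0=1$, and ${}_3F_2\!\left(\begin{matrix}-n,a_2,a_3\\ b_1,b_2\end{matrix};1\right)=\sum_{k=0}^n\frac{(-n)_k(a_2)_k(a_3)_k}{(b_1)_k(b_2)_k\,k!}$. For $N$ odd: $b_n^{(-1)}=-1-\alpha+\beta$ for $n$ even, $b_n^{(-1)}=-1+\alpha-\beta$ for $n$ odd; $u_n^{(-1)}=4n(N+1-n)$ for $n$ even, $u_n^{(-1)}=4(\alpha+n)(\beta+N+1-n)$ for $n$ odd. The monic dual $-1$ Hahn polynomials are defined by $P_{-1}=0$, $P_0=1$, $P_{n+1}(x)=(x-b_n^{(-1)})P_n(x)-u_n^{(-1)}P_{n-1}(x)$ for $n\ge0$. *)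

(* Defs.v *)
From HB Require Import structures.
From mathcomp Require Import all_boot all_order all_algebra.
Set Implicit Arguments. Unset Strict Implicit. Unset Printing Implicit Defensive.
Import Order.TTheory GRing.Theory Num.Theory.
Local Open Scope ring_scope.

Definition poch (T : comNzRingType) (c : T) (k : nat) : T :=
  \prod_(i < k) (c + i%:R).

(* 3F2(-n, a2, a3; b1, b2; 1) with polynomial upper parameters a2, a3 and
   scalar lower parameters b1, b2 : the terminating sum over k = 0..n. *)
Definition F32 (R : fieldType) (n : nat) (a2 a3 : {poly R}) (b1 b2 : R)
  : {poly R} :=
  \sum_(k < n.+1)
     ((poch (- n%:R) k) / (poch b1 k * poch b2 k * (k`!)%:R))
       *: (poch a2 k * poch a3 k).

(* Recurrence coefficients for N odd. *)
Definition bcoef (R : fieldType) (al be : R) (n : nat) : R :=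
  if odd n then -1 + al - be else -1 - al + be.

Definition ucoef (R : fieldType) (N : nat) (al be : R) (n : nat) : R :=
  if odd n then 4 * (al + n%:R) * (be + N%:R + 1 - n%:R)
  else 4 * n%:R * (N%:R + 1 - n%:R).

(* (P_{n-1}, P_n) *)
Fixpoint Hpair (R : fieldType) (N : nat) (al be : R) (n : nat)
  : {poly R} * {poly R} :=
  match n with
  | 0 => (0, 1)
  | m.+1 => let: (a, b) := Hpair N al be m in
            (b, ('X - (bcoef al be m)%:P) * b - (ucoef N al be m)%:P * a)
  end.

Definition dualHahn (R : fieldType) (N : nat) (al be : R) (n : nat) : {poly R} :=
  (Hpair N al be n).2.

(* Main.v *)
Require Import Defs.
From HB Require Import structures.
From mathcomp Require Import all_boot all_order all_algebra.
From mathcomp Require Import ring zify.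
Set Implicit Arguments. Unset Strict Implicit. Unset Printing Implicit Defensive.
Import Order.TTheory GRing.Theory Num.Theory.
Local Open Scope ring_scope.

Lemma poch0 (T : comNzRingType) (c : T) : poch c 0 = 1.
Proof. by rewrite /poch big_ord0. Qed.

Lemma pochS (T : comNzRingType) (c : T) k : poch c k.+1 = poch c k * (c + k%:R).
Proof. by rewrite /poch big_ord_recr. Qed.

Lemma pochSl (T : comNzRingType) (c : T) k : poch c k.+1 = c * poch (c + 1) k.
Proof.
rewrite /poch big_ord_recl addr0; congr (_ * _).
by apply: eq_bigr => i _; rewrite /= -nat1r addrA.
Qed.

Lemma pochD (T : comNzRingType) (c : T) k j :
  poch c (k + j) = poch c k * poch (c + k%:R) j.
Proof.
elim: j => [|j IH]; first by rewrite addn0 poch0 mulr1.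
by rewrite addnS !pochS IH natrD -mulrA addrA.
Qed.

Lemma lincomb (R : comNzRingType) (x y t d : R) : x - y = t * d -> d = 0 -> x = y.
Proof. by move=> h hd; apply/eqP; rewrite -subr_eq0 h hd mulr0. Qed.

Definition g (R : realFieldType) (M : nat) (b : R) (n k : nat) : R :=
  (-1) ^+ k * ('C(n, k))%:R * poch (b + k%:R) (n - k) * poch (k%:R - M%:R) (n - k).

Lemma g_small (R : realFieldType) M (b : R) n k : (n < k)%N -> g M b n k = 0.
Proof. by move=> h; rewrite /g bin_small // mulr0 !mul0r. Qed.

Lemma C1 (R : realFieldType) M (a : R) n k :
  g M a n.+1 k - ((n.+1)%:R * (M%:R - n%:R)) * g M (a + 1) n k = g M (a + 1) n.+1 k.
Proof.
case: (ltnP n.+1 k) => hk.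
  by rewrite !g_small ?mulr0 ?subr0 //; lia.
case: (leqP k n) => hkn; last first.
  have -> : k = n.+1 by lia.
  by rewrite (g_small _ _ (ltnSn n)) mulr0 subr0 /g subnn !poch0 !mulr1.
have [i ->] : exists i, n = (k + i)%N by exists (n - k)%N; lia.
rewrite /g (_ : ((k + i).+1 - k = i.+1)%N); last by lia.
rewrite (_ : ((k + i) - k = i)%N); last by lia.
rewrite pochSl [poch (k%:R - M%:R) i.+1]pochS [poch (a + 1 + k%:R) i.+1]pochS.
rewrite (_ : a + k%:R + 1 = a + 1 + k%:R); last by ring.
set P := poch (a + 1 + k%:R) i. set m := poch (k%:R - M%:R) i.
set c0 := 'C(k + i, k). set c1 := 'C((k + i).+1, k).
have h : (c1 * i.+1 = (k + i).+1 * c0)%N.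
  rewrite /c1 /c0 mulnC; have := mul_bin_down (k + i).+1 k; rewrite /= => ->.
  by congr (_ * _)%N; lia.
apply: (lincomb (t := - ((-1) ^+ k * P * m * ((k + i)%:R - M%:R))) (d := c1%:R * (i.+1)%:R - ((k + i).+1)%:R * c0%:R)).
  rewrite -!natr1 !natrD; ring.
by rewrite -!natrM h subrr.
Qed.

Definition gs (R : realFieldType) (M : nat) (b : R) (n k : nat) : R :=
  match k with 0 => 0 | k'.+1 => g M b n k' end.

Lemma C2 (R : realFieldType) M (a e : R) n k :
  g M (a + 1) n k * ((e + k%:R) ^+ 2 - (a - e) ^+ 2) - gs M (a + 1) n k
  - ((a + n%:R) * (2 * e - a + M%:R - n%:R)) * g M a n k = g M a n.+1 k.
Proof.
case: (ltnP n.+1 k) => hk.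
  case: k hk => [//|k] hk /=.
  by rewrite !g_small ?mulr0 ?mul0r ?subr0 //; lia.
case: (leqP k n) => hkn; last first.
  have -> : k = n.+1 by lia.
  rewrite /= (g_small _ _ (ltnSn n)) (g_small _ _ (ltnSn n)) /g !subnn !poch0.
  rewrite !binn ?mulr0 ?mul0r exprS. ring.
have [i ->] : exists i, n = (k + i)%N by exists (n - k)%N; lia.
case: k hk hkn => [|k] hk hkn.
  rewrite /= /g !subn0 !bin0 !add0n pochSl [poch (0%:R - M%:R) i.+1]pochS.
  rewrite !addr0.
  have h2 : poch a i * (a + i%:R) = a * poch (a + 1) i by rewrite -pochS pochSl.
  apply: (lincomb (t := - ((2 * e - a + M%:R - i%:R) * poch (0 - M%:R) i))
      (d := poch a i * (a + i%:R) - a * poch (a + 1) i)); last by rewrite h2 subrr.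
  rewrite expr0; ring.
rewrite [gs _ _ _ _]/= /g.
set c2 := 'C((k.+1 + i).+1, k.+1). set c0 := 'C(k.+1 + i, k.+1). set c1 := 'C(k.+1 + i, k).
have hb : c2%:R = c0%:R + c1%:R :> R by rewrite -natrD /c2 binS.
have h1 : (k.+1 * c0 = i.+1 * c1)%N.
  by rewrite mul_bin_left; congr (_ * _)%N; lia.
clearbody c0 c1 c2. rewrite hb.
rewrite (_ : (k.+1 + i - k.+1 = i)%N); last by lia.
rewrite (_ : ((k.+1 + i).+1 - k.+1 = i.+1)%N); last by lia.
rewrite (_ : (k.+1 + i - k = i.+1)%N); last by lia.
rewrite [poch (a + 1 + k%:R) i.+1]pochSl [poch (k%:R - M%:R) i.+1]pochSl.
rewrite [poch (a + k.+1%:R) i.+1]pochSl [poch (k.+1%:R - M%:R) i.+1]pochS.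
rewrite !natrD -!natr1 ![(-1) ^+ k.+1]exprS.
rewrite (_ : a + 1 + k%:R + 1 = a + 1 + (k%:R + 1)); last by ring.
rewrite (_ : a + (k%:R + 1) + 1 = a + 1 + (k%:R + 1)); last by ring.
rewrite (_ : k%:R - M%:R + 1 = k%:R + 1 - M%:R); last by ring.
have h2 : poch (a + (k%:R + 1)) i * (a + (k%:R + 1) + i%:R)
          = (a + (k%:R + 1)) * poch (a + 1 + (k%:R + 1)) i.
  by rewrite -pochS pochSl; congr (_ * poch _ _); ring.
have h1' : (k%:R + 1) * c0%:R = (i%:R + 1) * c1%:R :> R.
  by rewrite !natr1 -!natrM h1.
set p := poch (a + 1 + (k%:R + 1)) i. set r := poch (a + (k%:R + 1)) i.
set m := poch (k%:R + 1 - M%:R) i.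
have : (k%:R + 1) * c0%:R - (i%:R + 1) * c1%:R = 0 :> R by rewrite h1' subrr.
have : r * (a + (k%:R + 1) + i%:R) - (a + (k%:R + 1)) * p = 0 by rewrite h2 subrr.
move=> E2 E1.
apply: (lincomb (t := 1) (d := (- (-1) ^+ k * m * p * (a + (k%:R + 1))) *
   ((k%:R + 1) * c0%:R - (i%:R + 1) * c1%:R) +
   (- (2 * e - a + M%:R - (k%:R + 1 + i%:R)) * (- (-1) ^+ k) * c0%:R * m) *
   (r * (a + (k%:R + 1) + i%:R) - (a + (k%:R + 1)) * p))).
  ring.
by rewrite E1 E2 !mulr0 addr0.
Qed.

Definition zz (R : realFieldType) : {poly R} := (4^-1 *: 'X) ^+ 2.
Definition phi (R : realFieldType) (e : R) (k : nat) : {poly R} :=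
  \prod_(i < k) (((e + i%:R) ^+ 2)%:P - zz R).
Definition G (R : realFieldType) M (e b : R) n : {poly R} :=
  \sum_(k < n.+1) g M b n k *: phi e k.

Lemma phiS (R : realFieldType) (e : R) k : phi e k.+1 = phi e k * (((e + k%:R) ^+ 2)%:P - zz R).
Proof. by rewrite /phi big_ord_recr. Qed.

Lemma zphi (R : realFieldType) (e : R) k :
  zz R * phi e k = (e + k%:R) ^+ 2 *: phi e k - phi e k.+1.
Proof. rewrite phiS -mul_polyC; ring. Qed.

Lemma sum_widen (V : zmodType) (f : nat -> V) n m :
  (n <= m)%N -> (forall k, (n <= k)%N -> f k = 0) ->
  \sum_(k < n) f k = \sum_(k < m) f k.
Proof.
move=> hnm hf; rewrite (big_ord_widen m f hnm) big_mkcond /=.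
by apply: eq_bigr => k _; case: ifP => // /negbT; rewrite -leqNgt => /hf ->.
Qed.

Lemma G_widen (R : realFieldType) M (e b : R) n m : (n < m)%N ->
  G M e b n = \sum_(k < m) g M b n k *: phi e k.
Proof.
move=> h; rewrite /G; apply: (@sum_widen _ (fun k => g M b n k *: phi e k) n.+1 m) => // k hk.
by rewrite g_small ?scale0r.
Qed.

Lemma Gl1 (R : realFieldType) M (e a : R) n :
  G M e a n.+1 - ((n.+1)%:R * (M%:R - n%:R)) *: G M e (a + 1) n = G M e (a + 1) n.+1.
Proof.
rewrite (@G_widen _ _ _ _ n n.+2) // /G scaler_sumr -sumrB.
by apply: eq_bigr => k _; rewrite scalerA -scalerBl C1.
Qed.

Lemma Gl2 (R : realFieldType) M (e a : R) n :
  zz R * G M e (a + 1) n - (a - e) ^+ 2 *: G M e (a + 1) n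
  - ((a + n%:R) * (2 * e - a + M%:R - n%:R)) *: G M e a n = G M e a n.+1.
Proof.
have hs : \sum_(k < n.+1) g M (a + 1) n k *: phi e k.+1
        = \sum_(k < n.+2) gs M (a + 1) n k *: phi e k.
  rewrite [RHS]big_ord_recl /gs /= scale0r add0r.
  by apply: eq_bigr => i _; rewrite /bump add1n.
have hz : zz R * G M e (a + 1) n
   = \sum_(k < n.+2) (g M (a + 1) n k * (e + k%:R) ^+ 2) *: phi e k
     - \sum_(k < n.+2) gs M (a + 1) n k *: phi e k.
  rewrite -hs /G mulr_sumr -(@sum_widen _ (fun k => (g M (a + 1) n k * (e + k%:R) ^+ 2) *: phi e k) n.+1 n.+2) //; last first.
    by move=> k hk; rewrite g_small ?mul0r ?scale0r.
  rewrite -sumrB; apply: eq_bigr => k _.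
  by rewrite -scalerAr zphi scalerBr scalerA.
rewrite hz (@G_widen _ _ _ _ n n.+2) // (@G_widen _ _ _ _ n n.+2) // /G.
rewrite !scaler_sumr -!sumrB; apply: eq_bigr => k _.
rewrite !scalerA -!scalerBl -(C2 M a e n k); congr (_ *: _); ring.
Qed.

Lemma HpairS (R : fieldType) N (al be : R) m :
  Hpair N al be m.+1 = ((Hpair N al be m).2,
    ('X - (bcoef al be m)%:P) * (Hpair N al be m).2
      - (ucoef N al be m)%:P * (Hpair N al be m).1).
Proof. by rewrite /=; case: (Hpair N al be m). Qed.

Lemma zz16 (R : realFieldType) : 16 * zz R = 'X * 'X.
Proof.
rewrite /zz -mul_polyC.
have h : 16 * (4^-1)%:P * (4^-1)%:P = 1 :> {poly R}.
  rewrite -polyC_natr -!rmorphM /=.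
  have -> : 16%:R * 4^-1 * 4^-1 = 1 :> R.
    rewrite -mulrA -invfM (_ : 4 * 4 = 16%:R :> R); last by rewrite -natrM.
    by rewrite divff // pnatr_eq0.
  by [].
apply: (lincomb (t := 'X * 'X) (d := 16 * (4^-1)%:P * (4^-1)%:P - 1)); last by rewrite h subrr.
ring.
Qed.

Lemma Hahn (R : realFieldType) N (al be a e : R) M
  (hal : al = 2 * a - 1) (hbe : be = 4 * e - 2 * a - 1) (hN : N = (2 * M + 1)%N) n :
  (Hpair N al be (2 * n).+1).1 \Po ('X - 1) = 16 ^+ n *: G M e a n /\
  (Hpair N al be (2 * n).+1).2 \Po ('X - 1)
     = 16 ^+ n *: (('X + (al - be)%:P) * G M e (a + 1) n).
Proof.
subst al be N.
have pc : forall (c : R) (p : {poly R}), c *: p = c%:P * p by move=> c p; rewrite mul_polyC.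
elim: n => [|n [IH1 IH2]].
  rewrite HpairS /= /G !big_ord1 /g /phi !big_ord0 /= !poch0 binn !mulr1 !expr0 !scale1r.
  rewrite mulr0 subr0 mulr1 (comp_poly_multiplicative _).2; split => //.
  rewrite comp_polyB comp_polyX comp_polyC /bcoef /=.
  rewrite !(rmorphD, rmorphB, rmorphM, rmorphN, rmorph1, polyC_natr) /=.
  ring.
rewrite (_ : (2 * n.+1).+1 = (2 * n).+1.+2)%N; last by lia.
rewrite (HpairS _ _ _ (2 * n).+2) (HpairS _ _ _ (2 * n).+1).
set H := Hpair _ _ _ (2 * n).+1 in IH1 IH2 *.
rewrite /=.
rewrite /bcoef /ucoef.
have -> : odd (2 * n).+1 = true by rewrite /= oddM.
have -> : odd (2 * n).+1.+1 = false by rewrite /= oddM.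
have e1 : ((2 * n).+1)%:R = 2 * n%:R + 1 :> R by rewrite -natr1 natrM.
have e2 : ((2 * n).+2)%:R = 2 * n%:R + 2 :> R by rewrite -addn2 natrD natrM.
have e3 : ((2 * M + 1))%:R = 2 * M%:R + 1 :> R by rewrite natrD natrM.
have E1 : (('X - (-1 + (2 * a - 1) - (4 * e - 2 * a - 1))%:P) * H.2 -
   (4 * (2 * a - 1 + (2 * n).+1%:R) *
    (4 * e - 2 * a - 1 + (2 * M + 1)%:R + 1 - (2 * n).+1%:R))%:P * H.1) \Po ('X - 1)
   = 16 ^+ n.+1 *: G M e a n.+1.
  rewrite comp_polyB !comp_polyM comp_polyB comp_polyX !comp_polyC IH1 IH2 -Gl2.
  rewrite ?e1 ?e2 ?e3 [16 ^+ n.+1]exprS.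
  rewrite !pc.
  apply: (lincomb (t := - ((16 ^+ n)%:P * G M e (a + 1) n)) (d := 16 * zz R - 'X * 'X)).
    ring.
  by rewrite zz16 subrr.
split; first exact: E1.
rewrite comp_polyB comp_polyM E1 comp_polyM comp_polyB comp_polyX !comp_polyC IH2 -Gl1.
rewrite ?e1 ?e2 ?e3 [16 ^+ n.+1]exprS.
rewrite !pc.
ring.
Qed.

Lemma phi_poch (R : realFieldType) (e : R) k :
  poch (e%:P + 4^-1 *: 'X) k * poch (e%:P - 4^-1 *: 'X) k = phi e k.
Proof.
elim: k => [|k IH]; first by rewrite !poch0 mulr1 /phi big_ord0.
rewrite !pochS phiS -IH /zz -polyC_natr.
rewrite (_ : ((e + k%:R) ^+ 2)%:P = (e%:P + k%:R%:P) ^+ 2); last first.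
  by rewrite rmorphXn rmorphD.
ring.
Qed.

Lemma pochN (R : realFieldType) (n k : nat) : (k <= n)%N ->
  poch (- n%:R : R) k = (-1) ^+ k * ('C(n, k) * k`!)%:R.
Proof.
rewrite bin_ffact; elim: k => [|k IH] hk; first by rewrite poch0 ffactn0 expr0 mulr1.
rewrite pochS IH; last by lia.
rewrite ffactnSr natrM natrB; last by lia.
rewrite exprS; ring.
Qed.

Lemma pochM_neq0 (R : realFieldType) (M k : nat) : (k <= M)%N -> poch (- M%:R : R) k != 0.
Proof.
elim: k => [|k IH] hk; first by rewrite poch0 oner_eq0.
rewrite pochS mulf_neq0 //; first by apply: IH; lia.
rewrite addrC subr_eq0 eqr_nat; apply/eqP; lia.
Qed.

Lemma F32G (R : realFieldType) M (b e : R) n (hn : (n <= M)%N)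
  (hb : forall k, (k <= n)%N -> poch b k != 0) :
  (16 ^+ n * poch (- M%:R) n * poch b n) *:
     F32 n (e%:P + 4^-1 *: 'X) (e%:P - 4^-1 *: 'X) (- M%:R) b
  = 16 ^+ n *: G M e b n.
Proof.
rewrite /F32 /G !scaler_sumr; apply: eq_bigr => [[k hk]] _ /=.
rewrite phi_poch !scalerA; congr (_ *: _).
have hkn : (k <= n)%N by lia.
have [i hi] : exists i, n = (k + i)%N by exists (n - k)%N; lia.
rewrite /g (pochN R hkn) hi !pochD.
rewrite (_ : (k + i - k = i)%N); last by lia.
rewrite (_ : - M%:R + k%:R = k%:R - M%:R); last by ring.
have h1 := pochM_neq0 R (_ : (k <= M)%N).
have h2 := hb k hkn.
have h3 : (k`!)%:R != 0 :> R by rewrite pnatr_eq0 -lt0n fact_gt0.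
rewrite natrM.
field.
rewrite h2 h3 h1 //; lia.
Qed.

Theorem mainTheorem6 (R : realFieldType) (N : nat) (al be : R)
  (hN : odd N)
  (ha1 : forall k : nat, (k <= (N.-1)./2)%N -> poch ((al + 1) / 2) k != 0)
  (ha3 : forall k : nat, (k <= (N.-1)./2)%N -> poch ((al + 3) / 2) k != 0)
  (n : nat) (hn : (n <= (N.-1)./2)%N) :
  let eta := (al + be + 2) / 4 in
  let a2 := eta%:P + 4^-1 *: 'X in
  let a3 := eta%:P - 4^-1 *: 'X in
  let b1 := - ((N%:R - 1) / 2) in
  dualHahn N al be (2 * n) \Po ('X - 1)
    = (16 ^+ n * poch ((1 - N%:R) / 2) n * poch ((al + 1) / 2) n)
        *: F32 n a2 a3 b1 ((al + 1) / 2)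
  /\
  dualHahn N al be (2 * n).+1 \Po ('X - 1)
    = (16 ^+ n * poch ((1 - N%:R) / 2) n * poch ((al + 3) / 2) n)
        *: (('X + (al - be)%:P) * F32 n a2 a3 b1 ((al + 3) / 2)).
Proof.
move=> eta a2 a3 b1.
set M := (N.-1)./2 in ha1 ha3 hn.
have hNM : N = (2 * M + 1)%N.
  have h := odd_double_half N; rewrite hN in h.
  rewrite /M.
  have -> : N.-1 = (N./2).*2 by rewrite -{1}h add1n.
  rewrite doubleK -{1}h add1n -mul2n; lia.
have hNr : N%:R = 2 * M%:R + 1 :> R by rewrite hNM natrD natrM.
have hb1 : b1 = - M%:R by rewrite /b1 hNr; field.
have hc : (1 - N%:R) / 2 = - M%:R :> R by rewrite hNr; field.
set a := (al + 1) / 2 in ha1 *.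
have h3 : (al + 3) / 2 = a + 1 by rewrite /a; field.
rewrite h3 in ha3 *.
have hal : al = 2 * a - 1 by rewrite /a; field.
have hbe : be = 4 * eta - 2 * a - 1 by rewrite /eta /a; field.
have [H1 H2] := @Hahn R N al be a eta M hal hbe hNM n.
have hd1 : dualHahn N al be (2 * n) = (Hpair N al be (2 * n).+1).1 by rewrite HpairS.
rewrite /dualHahn in hd1 *.
rewrite hd1 H1 H2 hb1 hc /a2 /a3.
split.
  by rewrite F32G // => k hk; apply: ha1; lia.
rewrite !scalerAr F32G // => k hk; apply: ha3; lia.
Qed.
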